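(* For every positive integer $x$ there exist square-primes $a,b$ such that $x=a-b$.
   Context: A square-prime (SP-number) is a positive integer of the form $k^2p$ with $k\ge 2$ an integer and $p$ a prime. *)

(* Defs.v *)
From mathcomp Require Import all_boot.

Definition square_prime (n : nat) : Prop :=
  exists k p : nat, 2 <= k /\ prime p /\ n = k ^ 2 * p.

(* Main.v *)
From Stdlib Require Import Reals ZArith Lia Lra Psatz Classical.

Lemma php (n : nat) : forall f : nat -> nat, (forall i, (i <= n)%nat -> (f i < n)%nat) ->
  exists i j, (i < j <= n)%nat /\ f i = f j.
Proof.
induction n as [|n IH]; intros f Hf.
- specialize (Hf 0%nat (le_n 0)); lia.
- destruct (classic (exists i, (i <= n)%nat /\ f i = f (S n))) as [[i [Hi E]]|H].
  + exists i, (S n); split; [lia|exact E].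
  + set (c := f (S n)).
    destruct (IH (fun i => if Nat.ltb (f i) c then f i else Nat.pred (f i))) as [i [j [Hij E]]].
    * intros i Hi. assert (f i <> c) by (intro; apply H; exists i; split; [lia|auto]).
      assert (f i < S n)%nat by (apply Hf; lia). assert (c < S n)%nat by (apply Hf; lia).
      destruct (Nat.ltb_spec (f i) c); lia.
    * exists i, j; split; [lia|].
      assert (f i <> c) by (intro; apply H; exists i; split; [lia|auto]).
      assert (f j <> c) by (intro; apply H; exists j; split; [lia|auto]).
      destruct (Nat.ltb_spec (f i) c); destruct (Nat.ltb_spec (f j) c); lia.
Qed.
Open Scope R_scope.
Definition sD (D : Z) := sqrt (IZR D).
Definition err (D p q : Z) := Rabs (IZR q * sD D - IZR p).

Lemma fl_spec r : IZR (Int_part r) <= r < IZR (Int_part r) + 1.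
Proof. destruct (base_Int_part r); lra. Qed.

Lemma dir (D : Z) (HD : (0 < D)%Z) (N : nat) (HN : (1 <= N)%nat) :
  exists p q, (1 <= q <= Z.of_nat N)%Z /\ err D p q * INR N < 1.
Proof.
set (s := sD D).
set (fr := fun i : nat => INR i * s - IZR (Int_part (INR i * s))).
assert (Hfr : forall i, 0 <= fr i < 1).
{ intro i; unfold fr; destruct (fl_spec (INR i * s)); lra. }
set (b := fun i => Int_part (INR N * fr i)).
assert (HN' : 1 <= INR N) by (apply (le_INR 1); lia).
assert (Hb : forall i, (0 <= b i < Z.of_nat N)%Z).
{ intro i; unfold b; destruct (fl_spec (INR N * fr i)) as [h1 h2].
  specialize (Hfr i). split.
  - apply lt_IZR in h2 || idtac.
    assert (IZR (-1) < IZR (Int_part (INR N * fr i))) by (simpl; nra).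
    apply lt_IZR in H; lia.
  - apply lt_IZR. rewrite <- INR_IZR_INZ. nra. }
destruct (php N (fun i => Z.to_nat (b i))) as [i [j [Hij E]]].
{ intros i _; specialize (Hb i); lia. }
assert (Ebij : b i = b j) by (pose proof (Hb i); pose proof (Hb j); lia).
exists (Int_part (INR j * s) - Int_part (INR i * s))%Z, (Z.of_nat j - Z.of_nat i)%Z.
split; [lia|].
unfold err; fold s.
rewrite !minus_IZR, <- !INR_IZR_INZ.
replace ((INR j - INR i) * s - (IZR (Int_part (INR j * s)) - IZR (Int_part (INR i * s))))
  with (fr j - fr i) by (unfold fr; ring).
destruct (fl_spec (INR N * fr i)) as [h1 h2]. destruct (fl_spec (INR N * fr j)) as [h3 h4].
fold (b i) in h1, h2; fold (b j) in h3, h4. rewrite Ebij in h1, h2.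
assert (HRN : 0 < INR N) by lra.
assert (Rabs (fr j - fr i) * INR N = Rabs (INR N * fr j - INR N * fr i)).
{ rewrite <- (Rabs_pos_eq (INR N)) at 1 by lra. rewrite <- Rabs_mult. f_equal; ring. }
rewrite H. apply Rabs_def1; lra.
Qed.

Lemma sD_facts D : (0 < D)%Z -> 0 <= sD D /\ sD D * sD D = IZR D /\ sD D <= IZR D.
Proof.
intro HD. assert (h : 1 <= IZR D) by (apply IZR_le; lia).
unfold sD. split; [apply sqrt_pos|]. rewrite sqrt_sqrt by lra. split; [auto|].
pose proof (sqrt_pos (IZR D)). pose proof (sqrt_sqrt (IZR D)). nra.
Qed.

Lemma err_pos D p q : (0 < D)%Z -> (forall p q, q <> 0%Z -> (p*p <> D*(q*q))%Z) ->
  q <> 0%Z -> 0 < err D p q.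
Proof.
intros HD Hirr Hq. destruct (sD_facts D HD) as [h0 [h1 h2]].
unfold err. destruct (Rle_lt_or_eq_dec 0 _ (Rabs_pos (IZR q * sD D - IZR p))) as [h|h]; auto.
exfalso. apply (Hirr p q Hq). apply eq_IZR. rewrite !mult_IZR.
assert (IZR q * sD D - IZR p = 0).
{ destruct (Req_dec (IZR q * sD D - IZR p) 0) as [e|e]; auto. apply Rabs_no_R0 in e. lra. }
assert (IZR p = IZR q * sD D) by lra. rewrite H0. rewrite <- h1. ring.
Qed.

Lemma approx D (HD : (0 < D)%Z) e : 0 < e ->
  exists p q, (1 <= q)%Z /\ err D p q < e /\ err D p q * IZR q < 1.
Proof.
intro he. destruct (archimed (/ e)) as [h1 _].
set (N := Z.to_nat (up (/ e))).
assert (hpos : 0 < / e) by (apply Rinv_0_lt_compat; lra).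
assert (hup : (0 < up (/ e))%Z) by (apply lt_IZR; lra).
assert (HN : (1 <= N)%nat) by (unfold N; lia).
destruct (dir D HD N HN) as [p [q [Hq Herr]]].
exists p, q. pose proof (Rabs_pos (IZR q * sD D - IZR p)) as h0. fold (err D p q) in h0.
assert (INR N = IZR (up (/ e))) by (unfold N; rewrite INR_IZR_INZ; f_equal; lia).
assert (IZR q <= INR N) by (rewrite INR_IZR_INZ; apply IZR_le; lia).
assert (1 <= IZR q) by (apply IZR_le; lia).
split; [lia|split].
- assert (err D p q * (/ e) < 1) by nra.
  assert (err D p q * / e * e < e) by nra.
  replace (err D p q * / e * e) with (err D p q) in H3 by (field; lra). lra.
- nra.
Qed.

Lemma bound D (HD : (0 < D)%Z) p q : (1 <= q)%Z -> err D p q * IZR q < 1 ->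
  (Z.abs (p*p - D*(q*q)) <= 2*D)%Z.
Proof.
intros Hq He. destruct (sD_facts D HD) as [h0 [h1 h2]].
assert (hq : 1 <= IZR q) by (apply IZR_le; lia).
set (t := IZR q * sD D - IZR p) in *.
assert (E : IZR (p*p - D*(q*q)) = t*t - 2 * IZR q * sD D * t).
{ rewrite minus_IZR, !mult_IZR, <- h1. unfold t. ring. }
unfold err in He. fold t in He. clearbody t.
assert (Hlt : Rabs (IZR (p*p - D*(q*q))) < IZR (2*D+1)).
{ rewrite E, plus_IZR, mult_IZR. 
  destruct (Rle_or_lt 0 t) as [ht|ht].
  - rewrite Rabs_pos_eq in He by lra.
    assert (0 <= (IZR q - 1) * t) by (apply Rmult_le_pos; lra). assert (t < 1) by nra. assert (IZR q * t * sD D <= sD D) by (assert (0 <= (1 - t*IZR q) * sD D) by (apply Rmult_le_pos; lra); nra).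
    assert (t*t < 1) by nra. assert (0 <= IZR q * t * sD D) by (apply Rmult_le_pos; [apply Rmult_le_pos|]; lra).
    replace (2 * IZR q * sD D * t) with (2*(IZR q * t * sD D)) by ring.
    assert (0 <= t*t) by nra. clear -h0 h2 H1 H2 H3 H4; apply Rabs_def1; lra.
  - rewrite Rabs_left in He by lra.
    assert (0 <= (IZR q - 1) * (-t)) by (apply Rmult_le_pos; lra). assert (-t < 1) by nra. assert (IZR q * (-t) * sD D <= sD D) by (assert (0 <= (1 - (-t)*IZR q) * sD D) by (apply Rmult_le_pos; lra); nra).
    assert (t*t < 1) by nra. assert (0 <= IZR q * (-t) * sD D) by (apply Rmult_le_pos; [apply Rmult_le_pos|]; lra).
    replace (2 * IZR q * sD D * t) with (-(2*(IZR q * (-t) * sD D))) by ring.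
    assert (0 <= t*t) by nra. clear -h0 h2 H1 H2 H3 H4; apply Rabs_def1; lra. }
rewrite <- abs_IZR in Hlt || idtac.
apply lt_IZR in Hlt. lia.
Qed.

Definition good D (pq : Z * Z) := (1 <= snd pq)%Z /\
  (Z.abs (fst pq * fst pq - D * (snd pq * snd pq)) <= 2*D)%Z /\ 0 < err D (fst pq) (snd pq).

Lemma seqP D (HD : (0 < D)%Z) (Hirr : forall p q, q <> 0%Z -> (p*p <> D*(q*q))%Z) (n : nat) :
  exists g : nat -> Z * Z, (forall i, (i <= n)%nat -> good D (g i)) /\
    (forall i j, (i < j <= n)%nat -> err D (fst (g j)) (snd (g j)) < err D (fst (g i)) (snd (g i))).
Proof.
induction n as [|n [g [Hg Hd]]].
- destruct (approx D HD 1 Rlt_0_1) as [p [q [Hq [H1 H2]]]].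
  exists (fun _ => (p, q)). split; [|intros; lia].
  intros i _. unfold good; simpl. split; [lia|split].
  + apply bound; auto.
  + apply err_pos; auto; lia.
- destruct (Hg n (le_n n)) as [_ [_ Hpos]].
  destruct (approx D HD _ Hpos) as [p [q [Hq [H1 H2]]]].
  exists (fun i => if Nat.eqb i (S n) then (p, q) else g i). split.
  + intros i Hi. destruct (Nat.eqb_spec i (S n)).
    * unfold good; simpl. split; [lia|split]; [apply bound; auto|apply err_pos; auto; lia].
    * apply Hg; lia.
  + intros i j Hij. destruct (Nat.eqb_spec j (S n)); destruct (Nat.eqb_spec i (S n)); try lia.
    * simpl. destruct (Nat.eq_dec i n) as [->|Hin]; [lra|].
      pose proof (Hd i n ltac:(lia)). lra.
    * apply Hd; lia.
Qed.

Lemma decode B a1 a2 b1 b2 : (0 <= b1 < B)%Z -> (0 <= b2 < B)%Z -> (a1*B+b1 = a2*B+b2)%Z ->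
  a1 = a2 /\ b1 = b2.
Proof.
intros. assert (a1 = a2).
{ destruct (Z.lt_trichotomy a1 a2) as [h|[h|h]]; auto.
  - assert (a1 * B + B <= a2 * B)%Z by nia. lia.
  - assert (a2 * B + B <= a1 * B)%Z by nia. lia. }
subst; lia.
Qed.

Definition code D (pq : Z*Z) :=
  let M := (fst pq * fst pq - D * (snd pq * snd pq))%Z in
  (((M + 2*D) * (2*D) + fst pq mod Z.abs M) * (2*D) + snd pq mod Z.abs M)%Z.

Lemma code_bound D pq : (0 < D)%Z -> (forall p q, q <> 0%Z -> (p*p <> D*(q*q))%Z) -> good D pq ->
  (0 <= code D pq < (4*D+1)*(2*D)*(2*D))%Z.
Proof.
intros HD Hirr [Hq [HM Hpos]]. unfold code.
set (M := (fst pq * fst pq - D * (snd pq * snd pq))%Z) in *.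
assert (M <> 0%Z) by (intro E; apply (Hirr (fst pq) (snd pq)); lia).
pose proof (Z.mod_pos_bound (fst pq) (Z.abs M) ltac:(lia)).
pose proof (Z.mod_pos_bound (snd pq) (Z.abs M) ltac:(lia)).
set (r1 := (fst pq mod Z.abs M)%Z) in *. set (r2 := (snd pq mod Z.abs M)%Z) in *.
assert (0 <= (M + 2*D) * (2*D) + r1 <= (4*D+1)*(2*D) - 1)%Z by nia.
split; nia.
Qed.

Lemma modeq M a b : M <> 0%Z -> (a mod Z.abs M = b mod Z.abs M)%Z -> exists u, b = (a + M*u)%Z.
Proof.
intros HM E. pose proof (Z.div_mod a (Z.abs M) ltac:(lia)). pose proof (Z.div_mod b (Z.abs M) ltac:(lia)).
destruct (Z_le_gt_dec 0 M).
- rewrite Z.abs_eq in * by lia. exists (b / M - a / M)%Z. lia.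
- rewrite Z.abs_neq in * by lia. exists (-(b / - M - a / - M))%Z. lia.
Qed.

Lemma compose D p1 q1 p2 q2 M : M <> 0%Z -> (1 <= q1)%Z -> (1 <= q2)%Z ->
  (p1*p1 - D*(q1*q1) = M)%Z -> (p2*p2 - D*(q2*q2) = M)%Z ->
  (p1 mod Z.abs M = p2 mod Z.abs M)%Z -> (q1 mod Z.abs M = q2 mod Z.abs M)%Z ->
  (p1, q1) <> (p2, q2) ->
  exists k n, (0 < n)%Z /\ (k*k - D*(n*n) = 1)%Z.
Proof.
intros HM Hq1 Hq2 E1 E2 Hp Hq Hne.
destruct (modeq M p1 p2 HM Hp) as [u Hu]. destruct (modeq M q1 q2 HM Hq) as [v Hv].
set (w := (p1*u - D*q1*v)%Z).
assert (E3 : (2*w + M*(u*u - D*(v*v)) = 0)%Z).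
{ assert (M * (2*w + M*(u*u - D*(v*v))) = 0)%Z.
  { rewrite Hu, Hv in E2.
    assert ((p1 + M*u)*(p1 + M*u) - D*((q1 + M*v)*(q1 + M*v)) = (p1*p1 - D*(q1*q1)) + M * (2*w + M*(u*u - D*(v*v))))%Z by (unfold w; ring).
    lia. }
  apply Z.mul_eq_0 in H. lia. }
set (Y := (p1*v - u*q1)%Z).
assert (HY : Y <> 0%Z).
{ intro HY0. apply Hne.
  assert (Hc : (p1*q2 = p2*q1)%Z).
  { assert (p1*q2 - p2*q1 = M*Y)%Z by (rewrite Hu, Hv; unfold Y; ring). rewrite HY0 in H. lia. }
  assert (M*(q2*q2 - q1*q1) = 0)%Z.
  { assert (M*q2*q2 = p1*p1*(q2*q2) - D*(q1*q1)*(q2*q2))%Z by (rewrite <- E1; ring).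
    assert (M*q1*q1 = p2*p2*(q1*q1) - D*(q2*q2)*(q1*q1))%Z by (rewrite <- E2; ring).
    assert (p1*p1*(q2*q2) = p2*p2*(q1*q1))%Z by (replace (p1*p1*(q2*q2))%Z with ((p1*q2)*(p1*q2))%Z by ring; rewrite Hc; ring).
    assert (M*(q2*q2 - q1*q1) = M*q2*q2 - M*q1*q1)%Z by ring. lia. }
  apply Z.mul_eq_0 in H as [H|H]; [lia|].
  assert (q1 = q2).
  { assert ((q2 - q1)*(q2+q1) = 0)%Z by (rewrite <- H; ring).
    apply Z.mul_eq_0 in H0; lia. }
  subst q2.
  assert (Hpp : p1 = p2). { apply (Z.mul_reg_r _ _ q1). lia. rewrite <- H0 in Hc. exact Hc. } rewrite <- H0, Hpp; reflexivity. }
exists (1 + w)%Z, (Z.abs Y). split; [lia|].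
assert (Z.abs Y * Z.abs Y = Y * Y)%Z by (destruct (Z_le_gt_dec 0 Y); [rewrite Z.abs_eq|rewrite Z.abs_neq]; lia).
rewrite H.
assert ((1+w)*(1+w) - D*(Y*Y) = 1 + 2*w + (p1*p1 - D*(q1*q1))*(u*u - D*(v*v)))%Z by (unfold w, Y; ring).
rewrite H0, E1. lia.
Qed.

Lemma pellZ D : (0 < D)%Z -> (forall p q, q <> 0%Z -> (p*p <> D*(q*q))%Z) ->
  exists k n, (0 < n)%Z /\ (k*k - D*(n*n) = 1)%Z.
Proof.
intros HD Hirr.
set (K := ((4*D+1)*(2*D)*(2*D))%Z).
destruct (seqP D HD Hirr (Z.to_nat K)) as [g [Hg Hd]].
destruct (php (Z.to_nat K) (fun i => Z.to_nat (code D (g i)))) as [i [j [Hij E]]].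
{ intros i Hi. pose proof (code_bound D (g i) HD Hirr (Hg i Hi)). fold K in H. lia. }
pose proof (code_bound D (g i) HD Hirr (Hg i ltac:(lia))) as Bi.
pose proof (code_bound D (g j) HD Hirr (Hg j ltac:(lia))) as Bj.
assert (Ec : code D (g i) = code D (g j)) by lia.
pose proof (Hd i j Hij) as Herr.
destruct (Hg i ltac:(lia)) as [Hqi [HMi _]]. destruct (Hg j ltac:(lia)) as [Hqj [HMj _]].
destruct (g i) as [p1 q1], (g j) as [p2 q2]. simpl in *.
unfold code in Ec; simpl in Ec.
set (M1 := (p1 * p1 - D * (q1 * q1))%Z) in *. set (M2 := (p2 * p2 - D * (q2 * q2))%Z) in *.
assert (M1 <> 0%Z) by (intro; apply (Hirr p1 q1); lia).
assert (M2 <> 0%Z) by (intro; apply (Hirr p2 q2); lia).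
pose proof (Z.mod_pos_bound p1 (Z.abs M1) ltac:(lia)).
pose proof (Z.mod_pos_bound q1 (Z.abs M1) ltac:(lia)).
pose proof (Z.mod_pos_bound p2 (Z.abs M2) ltac:(lia)).
pose proof (Z.mod_pos_bound q2 (Z.abs M2) ltac:(lia)).
apply decode in Ec as [Ec1 Ec2]; try lia.
apply decode in Ec1 as [Ec3 Ec4]; try lia.
assert (EM : M1 = M2) by lia.
rewrite <- EM in Ec2, Ec4.
apply (compose D p1 q1 p2 q2 M1); auto.
- intro Heq. injection Heq as -> ->. lra.
Qed.

Close Scope R_scope.
Require Import Defs.
From mathcomp Require Import all_boot zify.

Lemma irr_rq (r q a b : nat) : prime r -> prime q -> r != q -> 0 < b -> a * a <> r * q * (b * b).
Proof.
move=> pr pq nrq b0 E.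
have a0 : 0 < a.
  case: a E => [|a] //= E. have : 0 < r * q * (b * b).
    by rewrite !muln_gt0 (prime_gt0 pr) (prime_gt0 pq) b0.
  by rewrite -E.
have rq0 : 0 < r * q by rewrite muln_gt0 (prime_gt0 pr) (prime_gt0 pq).
have bb0 : 0 < b * b by rewrite muln_gt0 b0.
have L1 : logn r (a * a) = logn r a + logn r a by rewrite lognM.
have L2 : logn r (r * q * (b * b)) = 1 + logn r b + logn r b.
  rewrite lognM // lognM ?(prime_gt0 pr) ?(prime_gt0 pq) // lognM //.
  by rewrite (logn_prime _ pr) (logn_prime _ pq) eqxx (negbTE nrq) addn0.
have := congr1 (logn r) E. rewrite L1 L2 => H.
have := congr1 odd H. rewrite !oddD. by case: (odd (logn r a)); case: (odd (logn r b)).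
Qed.

Lemma pell_nat (r q : nat) : prime r -> prime q -> r != q ->
  exists k n, 0 < n /\ k ^ 2 = 1 + r * q * n ^ 2.
Proof.
move=> pr pq nrq.
have r0 := prime_gt0 pr. have q0 := prime_gt0 pq.
have [k [n [n0 E]]] : exists k n : Z, (0 < n)%Z /\ (k*k - Z.of_nat (r*q)*(n*n) = 1)%Z.
  apply: pellZ; first by lia.
  move=> p q' Hq' Hp. apply: (irr_rq r q (Z.abs_nat p) (Z.abs_nat q') pr pq nrq); first by lia.
  nia.
exists (Z.abs_nat k), (Z.to_nat n); split; first by lia.
rewrite !expnS !expn0 !muln1. nia.
Qed.

Lemma spE k p : 2 <= k -> prime p -> square_prime (k ^ 2 * p).
Proof. by move=> hk hp; exists k, p. Qed.

Lemma caseG x p y : prime p -> x = p * y ->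
  ((exists t, y = 2*t+1 /\ 2 <= t) \/ (exists w, y = 4*w /\ 3 <= w)) ->
  exists a b : nat, square_prime a /\ square_prime b /\ a = x + b.
Proof.
move=> pp -> [[t [-> ht]]|[w [-> hw]]].
- exists ((t.+1)^2 * p), (t^2 * p); split; [apply: spE => //; lia|split; [apply: spE => //|]].
  rewrite !expnS !expn0 !muln1. nia.
- exists ((w.+1)^2 * p), ((w-1)^2 * p); split; [apply: spE => //; lia|split; [apply: spE => //; lia|]].
  rewrite !expnS !expn0 !muln1. nia.
Qed.

Lemma caseP x c r : prime r -> 0 < c -> x = c ^ 2 * r ->
  exists a b : nat, square_prime a /\ square_prime b /\ a = x + b.
Proof.
move=> pr c0 ->.
set q := if r == 2 then 3 else 2.
have pq : prime q by rewrite /q; case: (r == 2).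
have nrq : r != q by rewrite /q; case: (r =P 2) => [->|] // ?; apply/eqP.
have [k [n [n0 E]]] := pell_nat r q pr pq nrq.
have r2 := prime_gt1 pr. have q2 := prime_gt1 pq.
have k2 : 2 <= k.
  case: k E => [|[|k]] //; rewrite !expnS !expn0 !muln1 => E; nia.
exists ((c * k) ^ 2 * r), ((r * c * n) ^ 2 * q).
split; [apply: spE => //; nia|split; [apply: spE => //; nia|]].
move: E; rewrite !expnS !expn0 !muln1 => E. nia.
Qed.

Lemma expl a1 k1 p1 b1 k2 p2 x : 2 <= k1 -> prime p1 -> 2 <= k2 -> prime p2 ->
  a1 = k1 ^ 2 * p1 -> b1 = k2 ^ 2 * p2 -> a1 = x + b1 ->
  exists a b : nat, square_prime a /\ square_prime b /\ a = x + b.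
Proof. move=> h1 h2 h3 h4 -> -> E; exists (k1 ^ 2 * p1), (k2 ^ 2 * p2); split; [exact: spE|split; [exact: spE|exact E]]. Qed.

Theorem lemma3p1 (x : nat) : 0 < x ->
  exists a b : nat, square_prime a /\ square_prime b /\ a = x + b.
Proof.
move=> x0.
case: (ltnP 1 x) => x1; last first.
  have -> : x = 1 by lia.
  by apply: (expl 28 2 7 27 3 3).
have pp : prime (pdiv x) by rewrite pdiv_prime.
set p := pdiv x in pp *.
have pdx : p %| x by rewrite /p pdiv_dvd.
set y := x %/ p.
have Exy : x = p * y by rewrite /y mulnC divnK.
have p2 := prime_gt1 pp.
have pmin : forall d, 1 < d -> d %| x -> p <= d by move=> d d1 dx; apply: pdiv_min_dvd.
have y0 : 0 < y by move: x0; rewrite Exy muln_gt0 => /andP [].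
case: (eqVneq y 1) => [y1|yn1].
  by apply: (caseP x 1 p pp) => //; rewrite Exy y1 muln1 exp1n mul1n.
case: (boolP ((5 <= y) && (y %% 2 == 1))) => [/andP [h1 /eqP h2]|h].
  apply: (caseG x p y pp Exy); left; exists (y %/ 2); split; lia.
case: (boolP ((12 <= y) && (y %% 4 == 0))) => [/andP [h1 /eqP h2]|h'].
  apply: (caseG x p y pp Exy); right; exists (y %/ 4); split; lia.
case: (boolP (y %% 2 == 1)) => [/eqP yodd|yev].
  have y3 : y = 3 by move: h; rewrite yodd eqxx andbT; lia.
  have p3le : p <= 3 by apply: pmin => //; rewrite Exy y3 dvdn_mull.
  have p3 : p = 2 \/ p = 3 by lia.
  case: p3 => pv.
  - by apply: (expl 18 3 2 12 2 3); rewrite // Exy y3 pv.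
  - by apply: (expl 27 3 3 18 3 2); rewrite // Exy y3 pv.
have p2e : p = 2.
  have : p <= 2 by apply: pmin => //; rewrite Exy dvdn_mull // dvdn2; move: yev; rewrite modn2; case: (odd y).
  lia.
case: (boolP (y %% 4 == 0)) => [/eqP y4|y4].
  have : y = 4 \/ y = 8 by move: h'; rewrite y4 eqxx andbT; move: yev; lia.
  case => yv.
  - by apply: (expl 20 2 5 12 2 3); rewrite // Exy yv p2e.
  - by apply: (expl 28 2 7 12 2 3); rewrite // Exy yv p2e.
case: (eqVneq y 2) => [yv|yn2].
  by apply: (expl 12 2 3 8 2 2); rewrite // Exy yv p2e.
(* y = 2 mod 4, y >= 6 : x = 4 z, z odd >= 3 *)
set z := y %/ 2.
have Ez : x = 4 * z by move: yev y4 yn2; rewrite Exy p2e /z; lia.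
have z3 : 3 <= z by move: yev y4 yn2 y0; rewrite /z; lia.
have zodd : z %% 2 = 1 by move: yev y4; rewrite /z; lia.
have pz : prime (pdiv z) by rewrite pdiv_prime; lia.
set q := pdiv z in pz *.
have qdz : q %| z by rewrite /q pdiv_dvd.
set w := z %/ q.
have Ezw : z = q * w by rewrite /w mulnC divnK.
case: (eqVneq w 1) => [w1|wn1].
  apply: (caseP x 2 q pz) => //. by rewrite Ez Ezw w1 muln1.
have w0 : 0 < w by move: Ezw; lia.
have wodd : w %% 2 = 1.
  move: zodd; rewrite Ezw => H; apply/eqP; move: H.
  rewrite -modnMm. case: (w %% 2) (ltn_pmod w (isT : 0 < 2)) => [|[|]] //= _.
  by rewrite muln0 mod0n.
apply: (caseG x q (4 * w) pz); first by rewrite Ez Ezw; lia.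
right; exists w; split => //; lia.
Qed.
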